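(* Let $(X,d)$ be a locally compact noncompact Polish space with compatible metric $d$, let $A$ be a nonzero C*-algebra, and let $Y_n\subseteq X$ ($n\in\mathbb N$) be infinite, compact, pairwise disjoint sets such that no compact subset of $X$ meets infinitely many $Y_n$. Then: (1) for every $f\in\mathbb N^{\mathbb N}$, $D_f$ is a C*-subalgebra of $C_b(X,A)$, and if $A$ is unital then $D_f$ is unital; (2) if $f_1\le^* f_2$ then $C_{f_1}\subseteq C_{f_2}$; (3) $C_b(X,A)=\bigcup_{f\in\mathbb N^{\mathbb N}}D_f$; (4) for every $f\in\mathbb N^{\mathbb N}$ there is $g\in C_b(X,A)$ with $\pi(g)\notin C_f$.
   Context: $\mathbb N^{\mathbb N}$ denotes the set of sequences $f\colon\mathbb N\to\mathbb N$ with $f(n)>0$ for all $n$; $f_1\le^* f_2$ means $f_1(n)\le f_2(n)$ for all but finitely many $n$. $C_b(X,A)$ is the C*-algebra of bounded continuous functions $X\to A$, $C_0(X,A)$ the ideal of those vanishing at infinity, $Q(X,A)=C_b(X,A)/C_0(X,A)$ and $\pi\colon C_b(X,A)\to Q(X,A)$ the quotient map. For $f\in\mathbb N^{\mathbb N}$, $D_f=D_f(X,A,Y_n)=\{g\in C_b(X,A)\mid \forall\epsilon>0\ \exists n_0\ \forall n\ge n_0\ \forall x,y\in Y_n\ (d(x,y)<1/f(n)\Rightarrow\|g(x)-g(y)\|<\epsilon)\}$, and $C_f=\pi(D_f)$. *)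

(* Defs.v *)
From Stdlib Require Import Reals List.
Open Scope R_scope.

Record Cx := mkCx { cre : R; cim : R }.
Definition Cadd (a b : Cx) : Cx := mkCx (cre a + cre b) (cim a + cim b).
Definition Cmul (a b : Cx) : Cx :=
  mkCx (cre a * cre b - cim a * cim b) (cre a * cim b + cim a * cre b).
Definition Cconj (a : Cx) : Cx := mkCx (cre a) (- cim a).
Definition Cabs (a : Cx) : R := sqrt (cre a ^ 2 + cim a ^ 2).
Definition C1 : Cx := mkCx 1 0.

Record CStarAlg := {
  car :> Type;
  c0 : car;
  cadd : car -> car -> car;
  copp : car -> car;
  csc : Cx -> car -> car;
  cmul : car -> car -> car;
  cstar : car -> car;
  cnorm : car -> R;
  ax_addA : forall x y z, cadd x (cadd y z) = cadd (cadd x y) z;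
  ax_addC : forall x y, cadd x y = cadd y x;
  ax_add0 : forall x, cadd x c0 = x;
  ax_addN : forall x, cadd x (copp x) = c0;
  ax_sc1 : forall x, csc C1 x = x;
  ax_scA : forall a b x, csc a (csc b x) = csc (Cmul a b) x;
  ax_scDr : forall a x y, csc a (cadd x y) = cadd (csc a x) (csc a y);
  ax_scDl : forall a b x, csc (Cadd a b) x = cadd (csc a x) (csc b x);
  ax_mulA : forall x y z, cmul x (cmul y z) = cmul (cmul x y) z;
  ax_mulDl : forall x y z, cmul (cadd x y) z = cadd (cmul x z) (cmul y z);
  ax_mulDr : forall x y z, cmul x (cadd y z) = cadd (cmul x y) (cmul x z);
  ax_mulscl : forall a x y, cmul (csc a x) y = csc a (cmul x y);
  ax_mulscr : forall a x y, cmul x (csc a y) = csc a (cmul x y);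
  ax_starK : forall x, cstar (cstar x) = x;
  ax_starD : forall x y, cstar (cadd x y) = cadd (cstar x) (cstar y);
  ax_starsc : forall a x, cstar (csc a x) = csc (Cconj a) (cstar x);
  ax_starM : forall x y, cstar (cmul x y) = cmul (cstar y) (cstar x);
  ax_norm_ge0 : forall x, 0 <= cnorm x;
  ax_norm_eq0 : forall x, cnorm x = 0 -> x = c0;
  ax_normD : forall x y, cnorm (cadd x y) <= cnorm x + cnorm y;
  ax_normsc : forall a x, cnorm (csc a x) = Cabs a * cnorm x;
  ax_normM : forall x y, cnorm (cmul x y) <= cnorm x * cnorm y;
  ax_complete : forall u : nat -> car,
      (forall eps, eps > 0 -> exists N, forall m n, (m >= N)%nat -> (n >= N)%nat ->
          cnorm (cadd (u m) (copp (u n))) < eps) ->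
      exists l, forall eps, eps > 0 -> exists N, forall n, (n >= N)%nat ->
          cnorm (cadd (u n) (copp l)) < eps;
  ax_cstar : forall x, cnorm (cmul (cstar x) x) = cnorm x * cnorm x
}.

Arguments c0 {_}. Arguments cadd {_}. Arguments copp {_}. Arguments csc {_}.
Arguments cmul {_}. Arguments cstar {_}. Arguments cnorm {_}.

Definition csub {A : CStarAlg} (x y : A) : A := cadd x (copp y).

Definition nonzero_alg (A : CStarAlg) : Prop := exists a : A, a <> c0.
Definition unital_alg (A : CStarAlg) : Prop :=
  exists u : A, forall a : A, cmul u a = a /\ cmul a u = a.

Definition is_metric {X : Type} (d : X -> X -> R) : Prop :=
  (forall x y, 0 <= d x y) /\
  (forall x y, d x y = 0 <-> x = y) /\
  (forall x y, d x y = d y x) /\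
  (forall x y z, d x z <= d x y + d y z).

Definition open_set {X : Type} (d : X -> X -> R) (U : X -> Prop) : Prop :=
  forall x, U x -> exists eps, eps > 0 /\ forall y, d x y < eps -> U y.

Definition compact_set {X : Type} (d : X -> X -> R) (K : X -> Prop) : Prop :=
  forall (I : Type) (U : I -> X -> Prop),
    (forall i, open_set d (U i)) ->
    (forall x, K x -> exists i, U i x) ->
    exists l : list I, forall x, K x -> exists i, In i l /\ U i x.

Definition locally_compact {X : Type} (d : X -> X -> R) : Prop :=
  forall x, exists K eps, compact_set d K /\ eps > 0 /\
    forall y, d x y < eps -> K y.

Definition separable {X : Type} (d : X -> X -> R) : Prop :=
  exists s : nat -> X, forall x eps, eps > 0 -> exists n, d x (s n) < eps.

Definition complete_metric {X : Type} (d : X -> X -> R) : Prop :=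
  forall u : nat -> X,
    (forall eps, eps > 0 -> exists N, forall m n, (m >= N)%nat -> (n >= N)%nat ->
        d (u m) (u n) < eps) ->
    exists l, forall eps, eps > 0 -> exists N, forall n, (n >= N)%nat -> d (u n) l < eps.

Definition polish {X : Type} (d : X -> X -> R) : Prop :=
  separable d /\
  exists d' : X -> X -> R, is_metric d' /\ complete_metric d' /\
    forall U, open_set d U <-> open_set d' U.

Definition infinite_set {X : Type} (Y : X -> Prop) : Prop :=
  ~ exists l : list X, forall x, Y x -> In x l.

Definition continuous_fn {X : Type} (d : X -> X -> R) {A : CStarAlg} (g : X -> A) : Prop :=
  forall x eps, eps > 0 -> exists delta, delta > 0 /\
    forall y, d x y < delta -> cnorm (csub (g x) (g y)) < eps.

Definition Cb {X : Type} (d : X -> X -> R) {A : CStarAlg} (g : X -> A) : Prop :=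
  continuous_fn d g /\ exists M, forall x, cnorm (g x) <= M.

Definition C0 {X : Type} (d : X -> X -> R) {A : CStarAlg} (g : X -> A) : Prop :=
  Cb d g /\ forall eps, eps > 0 -> exists K, compact_set d K /\
    forall x, ~ K x -> cnorm (g x) < eps.

Definition fadd {X} {A : CStarAlg} (g h : X -> A) : X -> A := fun x => cadd (g x) (h x).
Definition fsub {X} {A : CStarAlg} (g h : X -> A) : X -> A := fun x => csub (g x) (h x).
Definition fsc {X} {A : CStarAlg} (a : Cx) (g : X -> A) : X -> A := fun x => csc a (g x).
Definition fmul {X} {A : CStarAlg} (g h : X -> A) : X -> A := fun x => cmul (g x) (h x).
Definition fstar {X} {A : CStarAlg} (g : X -> A) : X -> A := fun x => cstar (g x).
Definition fzero {X} {A : CStarAlg} : X -> A := fun _ => c0.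

Definition cstar_subalgebra {X : Type} (d : X -> X -> R) {A : CStarAlg}
    (S : (X -> A) -> Prop) : Prop :=
  (forall g, S g -> Cb d g) /\
  S fzero /\
  (forall g h, S g -> S h -> S (fadd g h)) /\
  (forall a g, S g -> S (fsc a g)) /\
  (forall g h, S g -> S h -> S (fmul g h)) /\
  (forall g, S g -> S (fstar g)) /\
  (forall g, Cb d g ->
     (forall eps, eps > 0 -> exists h, S h /\ forall x, cnorm (csub (g x) (h x)) <= eps) ->
     S g).

Definition unital_subalgebra {X : Type} {A : CStarAlg} (S : (X -> A) -> Prop) : Prop :=
  exists e, S e /\ forall g, S g -> forall x, cmul (e x) (g x) = g x /\ cmul (g x) (e x) = g x.

(* f in N^N: positive sequences *)
Definition posseq (f : nat -> nat) : Prop := forall n, (0 < f n)%nat.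

Definition le_star (f1 f2 : nat -> nat) : Prop :=
  exists N, forall n, (n >= N)%nat -> (f1 n <= f2 n)%nat.

Definition Df {X : Type} (d : X -> X -> R) (A : CStarAlg) (Y : nat -> X -> Prop)
    (f : nat -> nat) (g : X -> A) : Prop :=
  Cb d g /\
  forall eps, eps > 0 -> exists n0, forall n, (n >= n0)%nat ->
    forall x y, Y n x -> Y n y -> d x y < / INR (f n) ->
      cnorm (csub (g x) (g y)) < eps.

(* pi(g) \in C_f = pi(D_f), i.e. g \in D_f + C_0(X,A) *)
Definition in_Cf {X : Type} (d : X -> X -> R) (A : CStarAlg) (Y : nat -> X -> Prop)
    (f : nat -> nat) (g : X -> A) : Prop :=
  exists h, Df d A Y f h /\ C0 d (fsub g h).

(* Main.v *)
Require Import Defs.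
From Stdlib Require Import Reals List.
From Stdlib Require Import Lra Lia Psatz ClassicalEpsilon Classical.
Open Scope R_scope.


Lemma add0l {A : CStarAlg} (x : A) : cadd c0 x = x.
Proof. rewrite ax_addC. apply ax_add0. Qed.

Lemma addNl {A : CStarAlg} (x : A) : cadd (copp x) x = c0.
Proof. rewrite ax_addC. apply ax_addN. Qed.

Lemma opp_uniq {A : CStarAlg} (x y : A) : cadd x y = c0 -> y = copp x.
Proof.
  intro H. rewrite <- (ax_add0 _ y), <- (ax_addN _ x), ax_addA.
  rewrite (ax_addC _ y x), H. apply add0l.
Qed.

Lemma add_cancel {A : CStarAlg} (x y : A) : cadd x y = x -> y = c0.
Proof.
  intro H. transitivity (cadd (cadd (copp x) x) y).
  rewrite addNl, add0l; reflexivity.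
  rewrite <- ax_addA, H. apply addNl.
Qed.

Lemma sc0 {A : CStarAlg} (x : A) : csc (mkCx 0 0) x = c0.
Proof.
  apply (add_cancel (csc (mkCx 0 0) x)).
  rewrite <- ax_scDl. unfold Cadd; simpl. rewrite Rplus_0_r. reflexivity.
Qed.

Lemma scr0 {A : CStarAlg} (a : Cx) : csc a (@c0 A) = c0.
Proof.
  apply (add_cancel (csc a c0)). rewrite <- ax_scDr, ax_add0. reflexivity.
Qed.

Lemma Cabs_real r : Cabs (mkCx r 0) = Rabs r.
Proof. unfold Cabs; simpl. rewrite <- sqrt_Rsqr_abs. f_equal. unfold Rsqr. ring. Qed.

Lemma norm0 {A : CStarAlg} : cnorm (@c0 A) = 0.
Proof.
  rewrite <- (sc0 c0) at 1. rewrite ax_normsc, Cabs_real, Rabs_R0. ring.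
Qed.

Lemma opp_sc {A : CStarAlg} (b : Cx) (x : A) :
  copp (csc b x) = csc (mkCx (- cre b) (- cim b)) x.
Proof.
  symmetry. apply opp_uniq. rewrite <- ax_scDl. unfold Cadd; simpl.
  rewrite !Rplus_opp_r. apply sc0.
Qed.

Lemma norm_opp {A : CStarAlg} (x : A) : cnorm (copp x) = cnorm x.
Proof.
  rewrite <- (ax_sc1 _ x) at 1. rewrite opp_sc, ax_normsc. unfold C1; simpl.
  rewrite Ropp_0, Cabs_real, Rabs_Ropp, Rabs_R1. ring.
Qed.

Lemma opp0 {A : CStarAlg} : copp (@c0 A) = c0.
Proof. symmetry. apply opp_uniq. apply ax_add0. Qed.

Lemma csub_chain {A : CStarAlg} (x y z : A) : cadd (csub x y) (csub y z) = csub x z.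
Proof.
  unfold csub. rewrite <- ax_addA. f_equal. rewrite ax_addA, addNl. apply add0l.
Qed.

Lemma csub_xx {A : CStarAlg} (x : A) : csub x x = c0.
Proof. apply ax_addN. Qed.

Lemma csub_sym {A : CStarAlg} (x y : A) : csub y x = copp (csub x y).
Proof. apply opp_uniq. rewrite csub_chain. apply csub_xx. Qed.

Lemma norm_csub_sym {A : CStarAlg} (x y : A) : cnorm (csub y x) = cnorm (csub x y).
Proof. rewrite csub_sym. apply norm_opp. Qed.

Lemma norm_csub_tri {A : CStarAlg} (x y z : A) :
  cnorm (csub x z) <= cnorm (csub x y) + cnorm (csub y z).
Proof. rewrite <- (csub_chain x y z). apply ax_normD. Qed.

Lemma csub0 {A : CStarAlg} (x : A) : csub x c0 = x.
Proof. unfold csub. rewrite opp0. apply ax_add0. Qed.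

Lemma norm_le_sub {A : CStarAlg} (x y : A) : cnorm x <= cnorm (csub x y) + cnorm y.
Proof.
  pose proof (norm_csub_tri x y c0). rewrite !csub0 in H. exact H.
Qed.

Lemma norm_sub_le {A : CStarAlg} (x y : A) : cnorm (csub x y) <= cnorm x + cnorm y.
Proof. unfold csub. rewrite <- (norm_opp y). apply ax_normD. Qed.

Lemma sc_opp {A : CStarAlg} (a : Cx) (y : A) : csc a (copp y) = copp (csc a y).
Proof. apply opp_uniq. rewrite <- ax_scDr, ax_addN. apply scr0. Qed.

Lemma sc_sub {A : CStarAlg} (a : Cx) (x y : A) : csc a (csub x y) = csub (csc a x) (csc a y).
Proof. unfold csub. rewrite ax_scDr, sc_opp. reflexivity. Qed.

Lemma mulr0 {A : CStarAlg} (x : A) : cmul x c0 = c0.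
Proof. apply (add_cancel (cmul x c0)). rewrite <- ax_mulDr, ax_add0. reflexivity. Qed.

Lemma mul0l {A : CStarAlg} (x : A) : cmul c0 x = c0.
Proof. apply (add_cancel (cmul c0 x)). rewrite <- ax_mulDl, ax_add0. reflexivity. Qed.

Lemma mul_oppr {A : CStarAlg} (x y : A) : cmul x (copp y) = copp (cmul x y).
Proof. apply opp_uniq. rewrite <- ax_mulDr, ax_addN. apply mulr0. Qed.

Lemma mul_oppl {A : CStarAlg} (x y : A) : cmul (copp x) y = copp (cmul x y).
Proof. apply opp_uniq. rewrite <- ax_mulDl, ax_addN. apply mul0l. Qed.

Lemma mul_subr {A : CStarAlg} (x y z : A) : cmul x (csub y z) = csub (cmul x y) (cmul x z).
Proof. unfold csub. rewrite ax_mulDr, mul_oppr. reflexivity. Qed.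

Lemma mul_subl {A : CStarAlg} (x y z : A) : cmul (csub x y) z = csub (cmul x z) (cmul y z).
Proof. unfold csub. rewrite ax_mulDl, mul_oppl. reflexivity. Qed.

Lemma mul_diff {A : CStarAlg} (a b c e : A) :
  csub (cmul a b) (cmul c e) = cadd (cmul a (csub b e)) (cmul (csub a c) e).
Proof. rewrite mul_subr, mul_subl, csub_chain. reflexivity. Qed.

Lemma norm_mul_diff {A : CStarAlg} (a b c e : A) :
  cnorm (csub (cmul a b) (cmul c e)) <= cnorm a * cnorm (csub b e) + cnorm (csub a c) * cnorm e.
Proof.
  rewrite mul_diff. eapply Rle_trans; [apply ax_normD|].
  apply Rplus_le_compat; apply ax_normM.
Qed.

Lemma star0 {A : CStarAlg} : cstar (@c0 A) = c0.
Proof. apply (add_cancel (cstar c0)). rewrite <- ax_starD, ax_add0. reflexivity. Qed.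

Lemma star_opp {A : CStarAlg} (x : A) : cstar (copp x) = copp (cstar x).
Proof. apply opp_uniq. rewrite <- ax_starD, ax_addN. apply star0. Qed.

Lemma star_sub {A : CStarAlg} (x y : A) : cstar (csub x y) = csub (cstar x) (cstar y).
Proof. unfold csub. rewrite ax_starD, star_opp. reflexivity. Qed.

Lemma norm_star_ge {A : CStarAlg} (x : A) : cnorm x <= cnorm (cstar x).
Proof.
  pose proof (ax_cstar _ x). pose proof (ax_normM _ (cstar x) x).
  pose proof (ax_norm_ge0 _ x). pose proof (ax_norm_ge0 _ (cstar x)).
  destruct (Req_dec (cnorm x) 0) as [E|E]. lra.
  assert (cnorm x * cnorm x <= cnorm (cstar x) * cnorm x) by lra.
  apply (Rmult_le_reg_r (cnorm x)); lra.
Qed.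

Lemma norm_star {A : CStarAlg} (x : A) : cnorm (cstar x) = cnorm x.
Proof.
  apply Rle_antisym; [|apply norm_star_ge].
  rewrite <- (ax_starK _ x) at 2. apply norm_star_ge.
Qed.

Lemma sc_diff {A : CStarAlg} (r s : R) (a : A) :
  cnorm (csub (csc (mkCx r 0) a) (csc (mkCx s 0) a)) = Rabs (r - s) * cnorm a.
Proof.
  unfold csub. rewrite opp_sc, <- ax_scDl, ax_normsc. unfold Cadd; simpl.
  rewrite Ropp_0, Rplus_0_r, Cabs_real. reflexivity.
Qed.


Definition filt {X : Type} (F : (X -> X -> Prop) -> Prop) : Prop :=
  F (fun _ _ => True) /\
  (forall P Q, F P -> F Q -> F (fun a b => P a b /\ Q a b)) /\
  (forall P Q : X -> X -> Prop, (forall a b, P a b -> Q a b) -> F P -> F Q).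

Definition ctrl {X : Type} {A : CStarAlg} (F : (X -> X -> Prop) -> Prop) (g : X -> A) : Prop :=
  forall eps, eps > 0 -> F (fun a b => cnorm (csub (g a) (g b)) < eps).

Lemma sub_add {A : CStarAlg} (a b c e : A) :
  csub (cadd a b) (cadd c e) = cadd (csub a c) (csub b e).
Proof.
  unfold csub.
  assert (copp (cadd c e) = cadd (copp c) (copp e)) as ->.
  { symmetry. apply opp_uniq. rewrite <- ax_addA, (ax_addA _ e), (ax_addC _ e (copp c)),
      <- ax_addA, ax_addN, ax_add0, ax_addN. reflexivity. }
  rewrite <- !ax_addA. f_equal. rewrite !ax_addA. f_equal. apply ax_addC.
Qed.

Lemma ctrl_zero {X : Type} {A : CStarAlg} F : filt F -> @ctrl X A F fzero.
Proof.
  intros [T [I M]] eps He. eapply M; [|exact T]. intros a b _. unfold fzero.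
  rewrite csub_xx, norm0. lra.
Qed.

Lemma ctrl_const {X : Type} {A : CStarAlg} F (u : A) : filt F -> @ctrl X A F (fun _ => u).
Proof.
  intros [T [I M]] eps He. eapply M; [|exact T]. intros a b _.
  rewrite csub_xx, norm0. lra.
Qed.

Lemma ctrl_add {X : Type} {A : CStarAlg} F (g h : X -> A) : filt F -> ctrl F g -> ctrl F h -> ctrl F (fadd g h).
Proof.
  intros [T [I M]] Hg Hh eps He.
  eapply M; [|apply I; [apply (Hg (eps/2))|apply (Hh (eps/2))]; lra].
  intros a b [H1 H2]. unfold fadd. rewrite sub_add.
  eapply Rle_lt_trans; [apply ax_normD|]. lra.
Qed.

Lemma ctrl_sc {X : Type} {A : CStarAlg} F a (g : X -> A) : filt F -> ctrl F g -> ctrl F (fsc a g).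
Proof.
  intros [T [I M]] Hg eps He.
  assert (Hc : 0 <= Cabs a) by (unfold Cabs; apply sqrt_pos).
  eapply M; [|apply (Hg (eps / (Cabs a + 1)))].
  2:{ apply Rdiv_lt_0_compat; lra. }
  intros x y H. unfold fsc. rewrite <- sc_sub, ax_normsc.
  pose proof (ax_norm_ge0 _ (csub (g x) (g y))).
  apply Rle_lt_trans with ((Cabs a + 1) * cnorm (csub (g x) (g y))). nra.
  apply Rmult_lt_compat_l with (r := Cabs a + 1) in H; [|lra].
  replace ((Cabs a + 1) * (eps / (Cabs a + 1))) with eps in H by (field; lra). lra.
Qed.

Lemma ctrl_star {X : Type} {A : CStarAlg} F (g : X -> A) : filt F -> ctrl F g -> ctrl F (fstar g).
Proof.
  intros [T [I M]] Hg eps He. eapply M; [|apply (Hg eps He)].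
  intros x y H. unfold fstar. rewrite <- star_sub, norm_star. exact H.
Qed.

Lemma ctrl_mul {X : Type} {A : CStarAlg} F (g h : X -> A) Mg Mh :
  filt F -> (forall x, cnorm (g x) <= Mg) -> (forall x, cnorm (h x) <= Mh) ->
  ctrl F g -> ctrl F h -> ctrl F (fmul g h).
Proof.
  intros [T [I M]] Bg Bh Hg Hh eps He.
  set (K := Rmax Mg 0 + Rmax Mh 0 + 1).
  assert (HK : 0 < K) by (unfold K; pose proof (Rmax_r Mg 0); pose proof (Rmax_r Mh 0); lra).
  assert (He' : eps / K > 0) by (apply Rdiv_lt_0_compat; lra).
  eapply M; [|apply I; [apply (Hg _ He')|apply (Hh _ He')]].
  intros x y [H1 H2]. unfold fmul.
  eapply Rle_lt_trans; [apply norm_mul_diff|].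
  pose proof (Bg x). pose proof (Bh y). pose proof (Rmax_l Mg 0). pose proof (Rmax_l Mh 0).
  pose proof (Rmax_r Mg 0). pose proof (Rmax_r Mh 0).
  pose proof (ax_norm_ge0 _ (g x)). pose proof (ax_norm_ge0 _ (h y)).
  pose proof (ax_norm_ge0 _ (csub (h x) (h y))). pose proof (ax_norm_ge0 _ (csub (g x) (g y))).
  assert (eps = K * (eps / K)) as Ee by (field; lra).
  set (e := eps / K) in *.
  apply Rle_lt_trans with (Rmax Mg 0 * e + e * Rmax Mh 0).
  - apply Rplus_le_compat; [apply Rmult_le_compat|apply Rmult_le_compat]; lra.
  - assert (Hke : K * e = eps) by (unfold e; field; lra).
    rewrite <- Hke. unfold K. clearbody e K.
    replace ((Rmax Mg 0 + Rmax Mh 0 + 1) * e) with (Rmax Mg 0 * e + e * Rmax Mh 0 + e) by ring.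
    lra.
Qed.

Lemma ctrl_limit {X : Type} {A : CStarAlg} F (g : X -> A) : filt F ->
  (forall eps, eps > 0 -> exists h, ctrl F h /\ forall x, cnorm (csub (g x) (h x)) <= eps) ->
  ctrl F g.
Proof.
  intros [T [I M]] Hap eps He.
  destruct (Hap (eps/3)) as [h [Hh Hd]]; [lra|].
  eapply M; [|apply (Hh (eps/3)); lra].
  intros x y H.
  eapply Rle_lt_trans; [apply (norm_csub_tri _ (h x))|].
  pose proof (norm_csub_tri (h x) (h y) (g y)).
  pose proof (Hd x). pose proof (Hd y). rewrite norm_csub_sym in H2. simpl in H. lra.
Qed.


Definition Fc {X : Type} (d : X -> X -> R) (x : X) (P : X -> X -> Prop) : Prop :=
  exists delta, delta > 0 /\ forall y, d x y < delta -> P x y.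

Definition FD {X : Type} (d : X -> X -> R) (Y : nat -> X -> Prop) (f : nat -> nat)
  (P : X -> X -> Prop) : Prop :=
  exists n0, forall n, (n >= n0)%nat ->
    forall x y, Y n x -> Y n y -> d x y < / INR (f n) -> P x y.

Lemma filt_Fc {X} d (x : X) : filt (Fc d x).
Proof.
  split; [|split].
  - exists 1. split; [lra|]. auto.
  - intros P Q [d1 [H1 P1]] [d2 [H2 Q1]]. exists (Rmin d1 d2). split.
    + apply Rmin_pos; lra.
    + intros y Hy. split; [apply P1|apply Q1];
      [pose proof (Rmin_l d1 d2)|pose proof (Rmin_r d1 d2)]; lra.
  - intros P Q HPQ [d1 [H1 P1]]. exists d1. split; auto.
Qed.

Lemma filt_FD {X} d Y f : filt (@FD X d Y f).
Proof.
  split; [|split].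
  - exists 0%nat. auto.
  - intros P Q [n1 P1] [n2 Q1]. exists (max n1 n2). intros n Hn x y Hx Hy Hd.
    split; [apply (P1 n)|apply (Q1 n)]; auto; lia.
  - intros P Q HPQ [n1 P1]. exists n1. intros. apply HPQ. eauto.
Qed.

Lemma cont_ctrl {X : Type} {A : CStarAlg} d (g : X -> A) : continuous_fn d g <-> forall x, ctrl (Fc d x) g.
Proof.
  split.
  - intros H x eps He. destruct (H x eps He) as [dl [Hd P]]. exists dl. auto.
  - intros H x eps He. destruct (H x eps He) as [dl [Hd P]]. exists dl. auto.
Qed.

Lemma Df_ctrl {X : Type} {A : CStarAlg} d Y f (g : X -> A) : Df d A Y f g <-> Cb d g /\ ctrl (FD d Y f) g.
Proof. unfold Df, ctrl, FD. tauto. Qed.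

Lemma bound_nonneg {X} {A : CStarAlg} (g : X -> A) M :
  (forall x, cnorm (g x) <= M) -> forall x, cnorm (g x) <= Rmax M 0.
Proof. intros H x. eapply Rle_trans; [apply H|apply Rmax_l]. Qed.

Lemma part1 {X : Type} (d : X -> X -> R) (A : CStarAlg) Y f :
  cstar_subalgebra d (Df d A Y f) /\
  (unital_alg A -> unital_subalgebra (Df d A Y f)).
Proof.
  pose proof (@filt_FD X d Y f) as FF.
  assert (FC : forall x, filt (Fc d x)) by (intro; apply filt_Fc).
  split; [split; [|split; [|split; [|split; [|split; [|split]]]]]|].
  - intros g H. apply H.
  - apply Df_ctrl. split; [split|].
    + apply cont_ctrl. intro x. apply ctrl_zero, FC.
    + exists 0. intro. unfold fzero. rewrite norm0. lra.
    + apply ctrl_zero, FF.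
  - intros g h Hg Hh. apply Df_ctrl in Hg as [[Cg [Mg Bg]] Dg].
    apply Df_ctrl in Hh as [[Ch [Mh Bh]] Dh].
    apply Df_ctrl. split; [split|].
    + apply cont_ctrl. intro x. apply ctrl_add; [apply FC| |]; apply cont_ctrl; auto.
    + exists (Mg + Mh). intro x. unfold fadd. eapply Rle_trans; [apply ax_normD|].
      apply Rplus_le_compat; auto.
    + apply ctrl_add; auto.
  - intros a g Hg. apply Df_ctrl in Hg as [[Cg [Mg Bg]] Dg].
    apply Df_ctrl. split; [split|].
    + apply cont_ctrl. intro x. apply ctrl_sc; [apply FC|]; apply cont_ctrl; auto.
    + exists (Cabs a * Rmax Mg 0). intro x. unfold fsc. rewrite ax_normsc.
      apply Rmult_le_compat_l; [unfold Cabs; apply sqrt_pos|]. apply bound_nonneg; auto.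
    + apply ctrl_sc; auto.
  - intros g h Hg Hh. apply Df_ctrl in Hg as [[Cg [Mg Bg]] Dg].
    apply Df_ctrl in Hh as [[Ch [Mh Bh]] Dh].
    apply Df_ctrl. split; [split|].
    + apply cont_ctrl. intro x. apply (ctrl_mul _ _ _ Mg Mh); auto; apply cont_ctrl; auto.
    + exists (Rmax Mg 0 * Rmax Mh 0). intro x. unfold fmul.
      eapply Rle_trans; [apply ax_normM|].
      apply Rmult_le_compat; try apply ax_norm_ge0; apply bound_nonneg; auto.
    + apply (ctrl_mul _ _ _ Mg Mh); auto.
  - intros g Hg. apply Df_ctrl in Hg as [[Cg [Mg Bg]] Dg].
    apply Df_ctrl. split; [split|].
    + apply cont_ctrl. intro x. apply ctrl_star; [apply FC|]; apply cont_ctrl; auto.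
    + exists Mg. intro x. unfold fstar. rewrite norm_star. auto.
    + apply ctrl_star; auto.
  - intros g Cg Hap. apply Df_ctrl. split; auto.
    apply ctrl_limit; auto. intros eps He. destruct (Hap eps He) as [h [Hh Hd]]. exists h. split; [exact (proj2 (proj1 (Df_ctrl _ _ _ _) Hh))|exact Hd].
  - intros [u Hu]. exists (fun _ => u). split.
    + apply Df_ctrl. split; [split|].
      * apply cont_ctrl. intro x. apply ctrl_const, FC.
      * exists (cnorm u). intro. lra.
      * apply ctrl_const, FF.
    + intros g _ x. apply Hu.
Qed.

Lemma part2 {X : Type} (d : X -> X -> R) (A : CStarAlg) Y (f1 f2 : nat -> nat) :
  posseq f1 -> posseq f2 -> le_star f1 f2 ->
  forall g : X -> A, in_Cf d A Y f1 g -> in_Cf d A Y f2 g.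
Proof.
  intros P1 P2 [N HN] g [h [[Ch Dh] C0h]]. exists h. split; auto. split; auto.
  intros eps He. destruct (Dh eps He) as [n0 Hn0]. exists (max n0 N).
  intros n Hn x y Hx Hy Hd. apply (Hn0 n); auto; [lia|].
  eapply Rlt_le_trans; [exact Hd|]. apply Rinv_le_contravar.
  - apply lt_0_INR. apply P1.
  - apply le_INR. apply HN. lia.
Qed.


Lemma ball_open {X : Type} (d : X -> X -> R) (z : X) (r : R) : is_metric d -> Defs.open_set d (fun w => d z w < r).
Proof.
  intros [_ [_ [_ Ht]]] w Hw. exists (r - d z w). split; [lra|].
  intros v Hv. pose proof (Ht z w v). lra.
Qed.

Lemma list_min_pos {I : Type} (F : I -> R) (l : list I) :
  (forall i, F i > 0) -> exists m, m > 0 /\ forall i, In i l -> m <= F i.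
Proof.
  intro HF. induction l as [|a l IH].
  - exists 1. split; [lra|]. intros i [].
  - destruct IH as [m [Hm Hl]]. exists (Rmin m (F a)). split.
    + apply Rmin_pos; auto. apply HF.
    + intros i [<-|Hi]; [apply Rmin_r|]. eapply Rle_trans; [apply Rmin_l|]. auto.
Qed.

Lemma unif_cont {X : Type} {A : CStarAlg} (d : X -> X -> R) (K : X -> Prop) (g : X -> A) :
  is_metric d -> compact_set d K -> continuous_fn d g ->
  forall eps, eps > 0 -> exists delta, delta > 0 /\
    forall x y, K x -> K y -> d x y < delta -> cnorm (csub (g x) (g y)) < eps.
Proof.
  intros Hm HK Hg eps He.
  pose (I := {p : X * R | snd p > 0 /\ forall w, d (fst p) w < snd p ->
                 cnorm (csub (g (fst p)) (g w)) < eps / 2}).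
  pose (U := fun (i : I) w => d (fst (proj1_sig i)) w < snd (proj1_sig i) / 2).
  destruct (HK I U) as [l Hl].
  - intro i. apply ball_open, Hm.
  - intros x Kx. destruct (Hg x (eps/2)) as [dl [Hdl Hc]]; [lra|].
    exists (exist _ (x, dl) (conj Hdl Hc)). unfold U; simpl.
    destruct Hm as [_ [H0 _]]. assert (d x x = 0) as -> by (apply H0; auto). lra.
  - destruct (list_min_pos (fun i : I => snd (proj1_sig i) / 2) l) as [m [Hm0 Hml]].
    { intros [[z r] [Hr Hc]]. simpl in *. lra. }
    exists m. split; auto. intros x y Kx Ky Hxy.
    destruct (Hl x Kx) as [[[z r] [Hr Hc]] [Hin Hu]]. unfold U in Hu; simpl in *.
    pose proof (Hml _ Hin) as Hmr; simpl in Hmr.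
    destruct Hm as [_ [_ [Hs Ht]]].
    pose proof (Ht z x y) as T1.
    pose proof (Hc x ltac:(lra)) as T2. pose proof (Hc y ltac:(lra)) as T3.
    pose proof (norm_csub_tri (g x) (g z) (g y)) as T4. pose proof (norm_csub_sym (g z) (g x)) as T5. lra.
Qed.

Lemma part3 {X : Type} (d : X -> X -> R) (A : CStarAlg) (Y : nat -> X -> Prop) :
  is_metric d -> (forall n, compact_set d (Y n)) ->
  forall g : X -> A, Cb d g <-> exists f, posseq f /\ Df d A Y f g.
Proof.
  intros Hm HY g. split.
  - intros Cg.
    assert (Hk : forall n, exists k : nat, (0 < k)%nat /\ forall x y, Y n x -> Y n y ->
              d x y < / INR k -> cnorm (csub (g x) (g y)) < / INR (S n)).
    { intro n. destruct (unif_cont d (Y n) g Hm (HY n) (proj1 Cg) (/ INR (S n))) as [dl [Hdl Hu]].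
      { apply Rinv_0_lt_compat, lt_0_INR. lia. }
      destruct (archimed_cor1 dl Hdl) as [k [Hk1 Hk2]]. exists k. split; auto.
      intros x y Hx Hy Hd. apply Hu; auto. lra. }
    exists (fun n => proj1_sig (constructive_indefinite_description _ (Hk n))).
    split.
    + intro n. exact (proj1 (proj2_sig (constructive_indefinite_description _ (Hk n)))).
    + split; auto. intros eps He. destruct (archimed_cor1 eps He) as [N [HN1 HN2]].
      exists N. intros n Hn x y Hx Hy.
      destruct (constructive_indefinite_description _ (Hk n)) as [k [Hk1 Hk2]]. simpl.
      intro Hd. eapply Rlt_trans; [apply (Hk2 x y Hx Hy Hd)|].
      eapply Rle_lt_trans; [|exact HN1]. apply Rinv_le_contravar.
      * apply lt_0_INR; auto.
      * apply le_INR. lia.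
  - intros [f [_ [Cg _]]]. exact Cg.
Qed.

Lemma ratio_cont a b a' b' t eps :
  0 <= a -> 0 <= b -> 0 <= a' -> 0 <= b' -> 0 < a + b -> eps > 0 ->
  Rabs (a - a') <= t -> Rabs (b - b') <= t -> t < (a + b) / 4 -> t < eps * (a + b) / 4 ->
  Rabs (a / (a + b) - a' / (a' + b')) < eps.
Proof.
  intros Ha Hb Ha' Hb' Hs He H1 H2 H3 H4.
  assert (Ht : 0 <= t) by (eapply Rle_trans; [apply Rabs_pos|exact H1]).
  assert (-t <= a - a' <= t) as H1'.
  { pose proof (Rle_abs (a - a')). pose proof (Rle_abs (-(a - a'))). rewrite Rabs_Ropp in *. lra. }
  assert (-t <= b - b' <= t) as H2'.
  { pose proof (Rle_abs (b - b')). pose proof (Rle_abs (-(b - b'))). rewrite Rabs_Ropp in *. lra. }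
  clear H1 H2.
  assert (Hs' : a' + b' >= (a + b) / 2) by lra.
  replace (a / (a + b) - a' / (a' + b')) with ((a * (b' - b) - b * (a' - a)) / ((a + b) * (a' + b'))) by (field; lra).
  assert (Hn : Rabs (a * (b' - b) - b * (a' - a)) <= (a + b) * t).
  { apply Rabs_le. split; nra. }
  unfold Rdiv at 1. rewrite Rabs_mult, Rabs_inv, (Rabs_right ((a + b) * (a' + b'))) by nra. fold (Rdiv (Rabs (a * (b' - b) - b * (a' - a))) ((a + b) * (a' + b'))).
  apply Rle_lt_trans with ((a + b) * t / ((a + b) * (a' + b'))).
  { unfold Rdiv. apply Rmult_le_compat_r; auto. left. apply Rinv_0_lt_compat. nra. }
  replace ((a + b) * t / ((a + b) * (a' + b'))) with (t / (a' + b')) by (field; lra).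
  apply Rle_lt_trans with (t / ((a + b) / 2)).
  - unfold Rdiv. apply Rmult_le_compat_l; auto. apply Rinv_le_contravar; lra.
  - apply Rlt_le_trans with ((eps * (a + b) / 4) / ((a + b) / 2)).
    + unfold Rdiv. apply Rmult_lt_compat_r. apply Rinv_0_lt_compat; lra. lra.
    + replace ((eps * (a + b) / 4) / ((a + b) / 2)) with (eps / 2) by (field; lra). lra.
Qed.


Definition distE {X : Type} (d : X -> X -> R) (z : nat -> X) (p : X) : R -> Prop :=
  fun r => exists n, r = - Rabs (d p (z n)).

Lemma distE_bound {X : Type} d z (p : X) : bound (distE d z p).
Proof. exists 0. intros r [n ->]. pose proof (Rabs_pos (d p (z n))). lra. Qed.

Lemma distE_ne {X : Type} d z (p : X) : exists r, distE d z p r.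
Proof. exists (- Rabs (d p (z 0%nat))), 0%nat. reflexivity. Qed.

Definition pdist {X : Type} (d : X -> X -> R) (z : nat -> X) (p : X) : R :=
  - proj1_sig (completeness (distE d z p) (distE_bound d z p) (distE_ne d z p)).

Lemma pd_le {X : Type} d z (p : X) n : pdist d z p <= Rabs (d p (z n)).
Proof.
  unfold pdist. destruct (completeness _ _ _) as [m Hm]. simpl. destruct Hm as [Hub Hl].
  pose proof (Hub (- Rabs (d p (z n))) (ex_intro _ n eq_refl)). lra.
Qed.

Lemma pd_ge {X : Type} d z (p : X) c : (forall n, c <= Rabs (d p (z n))) -> c <= pdist d z p.
Proof.
  intro H. unfold pdist. destruct (completeness _ _ _) as [m Hm]. simpl. destruct Hm as [Hub Hl].
  assert (m <= - c). { apply Hl. intros r [n ->]. pose proof (H n). lra. } lra.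
Qed.

Lemma pd_nonneg {X : Type} d z (p : X) : 0 <= pdist d z p.
Proof. apply pd_ge. intro. apply Rabs_pos. Qed.

Lemma pd_lip {X : Type} d z (p q : X) : is_metric d ->
  pdist d z p <= d p q + pdist d z q.
Proof.
  intros [H0 [_ [_ Ht]]].
  assert (pdist d z p - d p q <= pdist d z q); [|lra].
  apply pd_ge. intro n. pose proof (pd_le d z p n). pose proof (Ht p q (z n)).
  rewrite !Rabs_right in * by (apply Rle_ge; apply H0). lra.
Qed.

Lemma pd_diff {X : Type} d z (p q : X) : is_metric d ->
  Rabs (pdist d z p - pdist d z q) <= d p q.
Proof.
  intro Hm. pose proof (pd_lip d z p q Hm). pose proof (pd_lip d z q p Hm).
  destruct Hm as [_ [_ [Hs _]]]. rewrite Hs in H0. apply Rabs_le. lra.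
Qed.

Lemma pd_at {X : Type} d z n : is_metric d -> @pdist X d z (z n) = 0.
Proof.
  intros Hm. apply Rle_antisym; [|apply pd_nonneg].
  pose proof (pd_le d z (z n) n). destruct Hm as [_ [H0 _]].
  rewrite (proj2 (H0 (z n) (z n)) eq_refl), Rabs_R0 in H. exact H.
Qed.

Lemma finmin_pos {X : Type} (d : X -> X -> R) (z : nat -> X) (p : X) N :
  (forall n, d p (z n) > 0) -> exists c, c > 0 /\ forall n, (n < N)%nat -> c <= d p (z n).
Proof.
  intro H. induction N as [|N IH].
  - exists 1. split; [lra|]. intros; lia.
  - destruct IH as [c [Hc Hl]]. exists (Rmin c (d p (z N))). split.
    + apply Rmin_pos; [exact Hc|apply H].
    + intros n Hn. destruct (Nat.eq_dec n N) as [->|Hne]; [apply Rmin_r|].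
      eapply Rle_trans; [apply Rmin_l|]. apply Hl. lia.
Qed.

Lemma pd_pos {X : Type} (d : X -> X -> R) (Y : nat -> X -> Prop) (z : nat -> X) (p : X) :
  is_metric d -> locally_compact d ->
  (forall K, compact_set d K -> exists N, forall n, (n >= N)%nat -> ~ exists x, K x /\ Y n x) ->
  (forall n, Y n (z n)) -> (forall n, p <> z n) -> pdist d z p > 0.
Proof.
  intros Hm Hlc HYloc Hz Hp.
  destruct (Hlc p) as [K [eps [HK [He HB]]]].
  destruct (HYloc K HK) as [N HN].
  destruct Hm as [H0 [Heq [Hs Ht]]].
  destruct (finmin_pos d z p N) as [c [Hc Hl]].
  { intro n. destruct (H0 p (z n)) as [?|E]; auto. exfalso. apply (Hp n). apply Heq. auto. }
  apply Rlt_le_trans with (Rmin c eps); [apply Rmin_pos; lra|].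
  apply pd_ge. intro n. rewrite Rabs_right by (apply Rle_ge, H0).
  destruct (Compare_dec.le_lt_dec N n) as [Hn|Hn].
  - destruct (Rlt_le_dec (d p (z n)) eps) as [Hlt|Hge].
    + exfalso. apply (HN n Hn). exists (z n). split; auto.
    + eapply Rle_trans; [apply Rmin_r|]. auto.
  - eapply Rle_trans; [apply Rmin_l|]. auto.
Qed.

Lemma close_pair {X : Type} (d : X -> X -> R) (K : X -> Prop) delta :
  is_metric d -> compact_set d K -> infinite_set K -> delta > 0 ->
  exists x y, K x /\ K y /\ x <> y /\ d x y < delta.
Proof.
  intros Hm HK Hinf Hdl. apply NNPP. intro Hno.
  assert (Hun : forall x y, K x -> K y -> d x y < delta -> x = y).
  { intros x y Kx Ky Hd. apply NNPP. intro Hne. apply Hno. exists x, y. auto. }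
  destruct (HK X (fun z w => d z w < delta / 2)) as [l Hl].
  - intro i. apply ball_open, Hm.
  - intros x _. exists x. destruct Hm as [_ [H0 _]].
    rewrite (proj2 (H0 x x) eq_refl). lra.
  - assert (Hlist : forall l : list X, exists l', forall x, K x ->
              (exists i, In i l /\ d i x < delta / 2) -> In x l').
    { induction l0 as [|a l0 IH].
      - exists nil. intros x _ [i [[] _]].
      - destruct IH as [l' Hl']. destruct (classic (exists w, K w /\ d a w < delta / 2))
          as [[w [Kw Hw]]|Hnw].
        + exists (w :: l'). intros x Kx [i [[<-|Hi] Hix]].
          * left. apply Hun; auto. destruct Hm as [_ [_ [Hs Ht]]].
            pose proof (Ht w a x). rewrite Hs in Hw. lra.
          * right. apply Hl'; eauto.
        + exists l'. intros x Kx [i [[<-|Hi] Hix]].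
          * exfalso. apply Hnw. eauto.
          * apply Hl'; eauto. }
    destruct (Hlist l) as [l' Hl']. apply Hinf. exists l'. intros x Kx.
    apply Hl'; auto.
Qed.


Lemma part4 {X : Type} (d : X -> X -> R) (A : CStarAlg) (Y : nat -> X -> Prop)
  (Hd : is_metric d) (Hlc : locally_compact d) (HA : nonzero_alg A)
  (HYinf : forall n, infinite_set (Y n))
  (HYcpt : forall n, compact_set d (Y n))
  (HYdisj : forall n m x, n <> m -> Y n x -> Y m x -> False)
  (HYloc : forall K, compact_set d K ->
     exists N, forall n, (n >= N)%nat -> ~ exists x, K x /\ Y n x) :
  forall f, posseq f -> exists g : X -> A, Cb d g /\ ~ in_Cf d A Y f g.
Proof.
  intros f Hf.
  assert (Hp : forall n, exists p : X * X, Y n (fst p) /\ Y n (snd p) /\ fst p <> snd p /\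
                 d (fst p) (snd p) < / INR (f n)).
  { intro n. destruct (close_pair d (Y n) (/ INR (f n)) Hd (HYcpt n) (HYinf n)) as [x [y H]].
    { apply Rinv_0_lt_compat, lt_0_INR, Hf. }
    exists (x, y). exact H. }
  set (xs := fun n => fst (proj1_sig (constructive_indefinite_description _ (Hp n)))).
  set (ys := fun n => snd (proj1_sig (constructive_indefinite_description _ (Hp n)))).
  assert (Hxy : forall n, Y n (xs n) /\ Y n (ys n) /\ xs n <> ys n /\ d (xs n) (ys n) < / INR (f n)).
  { intro n. unfold xs, ys. exact (proj2_sig (constructive_indefinite_description _ (Hp n))). }
  clearbody xs ys.
  assert (Hneq : forall n m, xs n <> ys m).
  { intros n m E. destruct (Nat.eq_dec n m) as [<-|Hne].
    - apply (proj1 (proj2 (proj2 (Hxy n)))). exact E.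
    - apply (HYdisj n m (xs n) Hne). apply Hxy. rewrite E. apply Hxy. }
  set (dZ := pdist d ys). set (dW := pdist d xs).
  assert (Hs : forall p, dZ p + dW p > 0).
  { intro p. pose proof (pd_nonneg d ys p). pose proof (pd_nonneg d xs p).
    fold dZ dW in H, H0.
    destruct (classic (exists n, p = ys n)) as [[n ->]|Hn].
    - assert (dW (ys n) > 0); [|lra].
      apply (pd_pos d Y); [exact Hd|exact Hlc|exact HYloc|intro m; apply Hxy|]. intros m E. apply (Hneq m n). auto.
    - assert (dZ p > 0); [|lra].
      apply (pd_pos d Y); [exact Hd|exact Hlc|exact HYloc|intro m; apply Hxy|]. intros m E. apply Hn. eauto. }
  set (psi := fun p => dZ p / (dZ p + dW p)).
  assert (Hpsi01 : forall p, Rabs (psi p) <= 1).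
  { intro p. unfold psi. pose proof (Hs p). pose proof (pd_nonneg d ys p).
    pose proof (pd_nonneg d xs p). fold dZ dW in H0, H1.
    rewrite Rabs_right. 2:{ apply Rle_ge. unfold Rdiv. apply Rmult_le_pos; auto.
      left. apply Rinv_0_lt_compat. auto. }
    apply (Rmult_le_reg_r (dZ p + dW p)); auto. unfold Rdiv.
    rewrite Rmult_assoc, Rinv_l by lra. lra. }
  assert (Hpsic : forall p eps, eps > 0 -> exists dl, dl > 0 /\
             forall q, d p q < dl -> Rabs (psi p - psi q) < eps).
  { intros p eps He. pose proof (Hs p).
    exists (Rmin ((dZ p + dW p) / 4) (eps * (dZ p + dW p) / 4)). split.
    { apply Rmin_pos; [lra|]. pose proof (Rmult_lt_0_compat eps _ He H). lra. }
    intros q Hq. unfold psi. apply ratio_cont with (t := d p q); auto.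
    - apply pd_nonneg.
    - apply pd_nonneg.
    - apply pd_nonneg.
    - apply pd_nonneg.
    - apply pd_diff; auto.
    - apply pd_diff; auto.
    - eapply Rlt_le_trans; [exact Hq|apply Rmin_l].
    - eapply Rlt_le_trans; [exact Hq|apply Rmin_r]. }
  destruct HA as [a0 Ha0].
  assert (Hna : cnorm a0 > 0).
  { destruct (ax_norm_ge0 _ a0) as [?|E]; auto. exfalso. apply Ha0. apply ax_norm_eq0. auto. }
  set (g := fun p => csc (mkCx (psi p) 0) a0).
  assert (Hgd : forall p q, cnorm (csub (g p) (g q)) = Rabs (psi p - psi q) * cnorm a0).
  { intros. apply sc_diff. }
  assert (Hx1 : forall n, psi (xs n) = 1).
  { intro n. unfold psi. assert (dW (xs n) = 0) as -> by (apply pd_at; auto).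
    assert (dZ (xs n) > 0).
    { apply (pd_pos d Y); [exact Hd|exact Hlc|exact HYloc|intro m; apply Hxy|]. intro m. apply Hneq. }
    field. lra. }
  assert (Hy0 : forall n, psi (ys n) = 0).
  { intro n. unfold psi. assert (dZ (ys n) = 0) as -> by (apply pd_at; auto).
    unfold Rdiv. ring. }
  exists g. split.
  - split.
    + intros p eps He. destruct (Hpsic p (eps / (cnorm a0 + 1))) as [dl [Hdl Hq]].
      { apply Rdiv_lt_0_compat; lra. }
      exists dl. split; auto. intros q Hpq. rewrite Hgd.
      pose proof (Hq q Hpq). pose proof (Rabs_pos (psi p - psi q)).
      apply Rle_lt_trans with (Rabs (psi p - psi q) * (cnorm a0 + 1)); [nra|].
      apply Rmult_lt_compat_r with (r := cnorm a0 + 1) in H; [|lra].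
      replace (eps / (cnorm a0 + 1) * (cnorm a0 + 1)) with eps in H by (field; lra). exact H.
    + exists (cnorm a0). intro p. unfold g. rewrite ax_normsc, Cabs_real.
      pose proof (Hpsi01 p). nra.
  - intros [h [[_ Dh] [_ C0h]]].
    set (e := cnorm a0 / 3).
    assert (He : e > 0) by (unfold e; lra).
    destruct (C0h e He) as [K [HK HKo]].
    destruct (HYloc K HK) as [N HN].
    destruct (Dh e He) as [n0 Hn0].
    set (n := max N n0).
    destruct (Hxy n) as [Hxn [Hyn [_ Hdn]]].
    assert (Kx : ~ K (xs n)) by (intro Kx; apply (HN n); [lia|]; eauto).
    assert (Ky : ~ K (ys n)) by (intro Ky; apply (HN n); [lia|]; eauto).
    pose proof (HKo _ Kx) as T1. pose proof (HKo _ Ky) as T2. unfold fsub in T1, T2.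
    pose proof (Hn0 n ltac:(lia) _ _ Hxn Hyn Hdn) as T3.
    pose proof (Hgd (xs n) (ys n)) as T4. rewrite Hx1, Hy0 in T4.
    replace (Rabs (1 - 0)) with 1 in T4 by (rewrite Rminus_0_r, Rabs_R1; reflexivity).
    pose proof (norm_csub_tri (g (xs n)) (h (xs n)) (g (ys n))) as T5.
    pose proof (norm_csub_tri (h (xs n)) (h (ys n)) (g (ys n))) as T6.
    pose proof (norm_csub_sym (g (ys n)) (h (ys n))) as T7.
    unfold e in *. lra.
Qed.

Theorem proposition2p3
  (X : Type) (d : X -> X -> R) (A : CStarAlg) (Y : nat -> X -> Prop)
  (Hd : is_metric d) (Hlc : locally_compact d) (Hnc : ~ compact_set d (fun _ => True))
  (Hpol : polish d) (HA : nonzero_alg A)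
  (HYinf : forall n, infinite_set (Y n))
  (HYcpt : forall n, compact_set d (Y n))
  (HYdisj : forall n m x, n <> m -> Y n x -> Y m x -> False)
  (HYloc : forall K, compact_set d K ->
     exists N, forall n, (n >= N)%nat -> ~ exists x, K x /\ Y n x) :
  (* (1) *)
  (forall f, posseq f ->
     cstar_subalgebra d (Df d A Y f) /\
     (unital_alg A -> unital_subalgebra (Df d A Y f))) /\
  (* (2) *)
  (forall f1 f2, posseq f1 -> posseq f2 -> le_star f1 f2 ->
     forall g, Cb d g -> in_Cf d A Y f1 g -> in_Cf d A Y f2 g) /\
  (* (3) *)
  (forall g : X -> A, Cb d g <-> exists f, posseq f /\ Df d A Y f g) /\
  (* (4) *)
  (forall f, posseq f -> exists g : X -> A, Cb d g /\ ~ in_Cf d A Y f g).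
Proof.
  split; [|split; [|split]].
  - intros f _. apply part1.
  - intros f1 f2 P1 P2 L g _. apply part2; auto.
  - apply part3; auto.
  - apply part4; auto.
Qed.
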